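(* Let $\Gamma\cong\mathbb{Z}_p^d$, with $\mathbb{Z}_p$-basis $\sigma_1,\dots,\sigma_d$ and tight set of generators $\tau_1,\dots,\tau_c$. For $m\ge n\ge 0$, put $\nu_{n,m}=\prod_{i=1}^d\nu_{\sigma_i,n,m}\in\Lambda_\Gamma$. Then $\nu_{n,m}\cdot\mathscr J_n\subset\mathscr J_m$.
   Context: $\Lambda_\Gamma=\mathbb{Z}_p[[\Gamma]]$. For $\sigma\in\Gamma$, $\sigma\neq1$: $\omega_{\sigma,n}=\sigma^{p^n}-1$ ($n\ge0$), $\omega_{\sigma,-1}=1$, $\nu_{\sigma,n,m}=\omega_{\sigma,m}/\omega_{\sigma,n}$ ($m\ge n\ge-1$). A set $\tau_1,\dots,\tau_c$ of topological generators of $\Gamma$ is tight if no $\tau_i$ lies in $\Gamma^p$ and the closed subgroups generated by $\tau_i,\tau_j$ are distinct for $i\neq j$. $\mathscr J_n=(\nu_{\tau_1,0,n},\dots,\nu_{\tau_c,0,n})\subset\Lambda_\Gamma$. *)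

(* Defs.v *)
(* Concrete model of Gamma = Z_p^d and of the Iwasawa algebra
   Lambda_Gamma = Z_p[[Gamma]] = lim_k (Z/p^(k+1))[Gamma / Gamma^(p^(k+1))]. *)
From mathcomp Require Import all_boot all_order all_algebra.
Set Implicit Arguments. Unset Strict Implicit. Unset Printing Implicit Defensive.
Import GRing.Theory.
Local Open Scope ring_scope.

Section Iwasawa.
Variables (p d : nat).

(* level k : coefficients and group both modulo p^(k+1) *)
Definition Zl (k : nat) := 'Z_(p ^ k.+1).
Definition Gl (k : nat) := 'rV[Zl k]_d.              (* Gamma / Gamma^(p^(k+1)) *)
Definition GRl (k : nat) := {ffun Gl k -> Zl k}.

Definition redZ k (x : Zl k.+1) : Zl k := inZp (x : nat).
Definition redG k (g : Gl k.+1) : Gl k := map_mx (@redZ k) g.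
Definition projGR k (f : GRl k.+1) : GRl k :=
  [ffun y => \sum_(x : Gl k.+1 | redG x == y) redZ (f x)].

Definition deltaGR k (g : Gl k) : GRl k := [ffun x => (x == g)%:R].
Definition oneGR k : GRl k := deltaGR 0.
Definition addGR k (f g : GRl k) : GRl k := [ffun x => f x + g x].
Definition zeroGR k : GRl k := [ffun _ => 0].
Definition mulGR k (f g : GRl k) : GRl k :=
  [ffun z => \sum_(x : Gl k) f x * g (z - x)].

(* Z_p : compatible families *)
Definition ZpF := forall k, Zl k.
Definition isZp (a : ZpF) := forall k, redZ (a k.+1) = a k.

(* Gamma = Z_p^d : compatible families of row vectors; written additively *)
Definition GamF := forall k, Gl k.
Definition isGam (g : GamF) := forall k, redG (g k.+1) = g k.
Definition zscale (a : ZpF) (g : GamF) : GamF := fun k => g k *+ (a k : nat).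

(* Lambda_Gamma : compatible families of group ring elements *)
Definition LamF := forall k, GRl k.
Definition isLam (x : LamF) := forall k, projGR (x k.+1) = x k.
Definition mulL (x y : LamF) : LamF := fun k => mulGR (x k) (y k).

Definition is_Zp_basis (s : 'I_d -> GamF) :=
  (forall i, isGam (s i)) /\
  (forall g, isGam g ->
     exists a : 'I_d -> ZpF, (forall i, isZp (a i)) /\
       forall k, g k = \sum_(i < d) zscale (a i) (s i) k) /\
  (forall a b : 'I_d -> ZpF, (forall i, isZp (a i)) -> (forall i, isZp (b i)) ->
     (forall k, \sum_(i < d) zscale (a i) (s i) k = \sum_(i < d) zscale (b i) (s i) k) ->
     forall i k, a i k = b i k).

(* g lies in the closed subgroup generated by the family t: for every open
   subgroup Gamma^(p^(k+1)), g lies in <t> Gamma^(p^(k+1)) *)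
Definition in_closed_span c (t : 'I_c -> GamF) (g : GamF) :=
  forall k, exists e : 'I_c -> nat, g k = \sum_(i < c) t i k *+ e i.
Definition in_closed_span1 (t : GamF) (g : GamF) :=
  forall k, exists e : nat, g k = t k *+ e.

Definition tight c (t : 'I_c -> GamF) :=
  (forall i, isGam (t i)) /\
  (forall g, isGam g -> in_closed_span t g) /\
  (forall i, ~ exists g, isGam g /\ forall k, t i k = g k *+ p) /\
  (forall i j, i != j ->
     ~ (forall g, isGam g -> (in_closed_span1 (t i) g <-> in_closed_span1 (t j) g))).

(* nu_{sigma,n,m} = omega_{sigma,m}/omega_{sigma,n}
                  = sum_{j < p^(m-n)} sigma^(j p^n)   (m >= n >= 0) *)
Definition nuS (s : GamF) (n m : nat) : LamF := fun k =>
  \big[@addGR k/zeroGR k]_(j < p ^ (m - n)) deltaGR (s k *+ (j * p ^ n)%N).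

Definition nuNM (s : 'I_d -> GamF) (n m : nat) : LamF := fun k =>
  \big[@mulGR k/oneGR k]_(i < d) nuS (s i) n m k.

Definition in_ideal c (gs : 'I_c -> LamF) (x : LamF) :=
  exists a : 'I_c -> LamF, (forall i, isLam (a i)) /\
    forall k, x k = \big[@addGR k/zeroGR k]_(i < c) mulGR (a i k) (gs i k).

Definition in_J c (t : 'I_c -> GamF) (n : nat) (x : LamF) :=
  in_ideal (fun i => nuS (t i) 0 n) x.

End Iwasawa.

(* Main.v *)
From HB Require Import structures.
From Stdlib Require Import Classical ClassicalEpsilon.
Require Import Defs.
From mathcomp Require Import all_boot all_order all_algebra zify.
Unset Printing Implicit Defensive.


Lemma finite_bound (Y : finType) (Q : Y -> nat -> Prop) :
  (forall y j j', j <= j' -> Q y j' -> Q y j) ->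
  (forall y, exists j, ~ Q y j) -> exists J, forall y, ~ Q y J.
Proof.
move=> mono H.
suff [J HJ] : exists J, forall y, y \in enum Y -> ~ Q y J.
  by exists J => y; apply: HJ; rewrite mem_enum.
elim: (enum Y) => [|y s [J IH]]; first by exists 0.
have [j Hj] := H y; exists (maxn j J) => z; rewrite inE => /orP [/eqP -> | zs] HQ.
  by apply: Hj; apply: (mono _ _ _ (leq_maxl j J)).
by apply: (IH z zs); apply: (mono _ _ _ (leq_maxr j J)).
Qed.

Section Compact.
Variable X : nat -> finType.
Variable pr : forall k, X k.+1 -> X k.
Variable Sp : forall k, X k -> Prop.
Hypothesis Sne : forall k, exists x, Sp k x.
Hypothesis Scomp : forall k x, Sp k.+1 x -> Sp k (pr _ x).

Fixpoint good (j : nat) : forall k, X k -> Prop :=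
  match j with
  | 0 => Sp
  | j'.+1 => fun k x => exists x', pr _ x' = x /\ good j' k.+1 x'
  end.

Lemma good_ne j k : exists x, good j k x.
Proof.
elim: j k => [|j IH] k; first exact: Sne.
by have [x' Hx'] := IH k.+1; exists (pr _ x'), x'.
Qed.

Lemma good_dec j k x : good j.+1 k x -> good j k x.
Proof.
elim: j k x => [|j IH] k x /= [x' [<- Hx']]; first exact: Scomp.
by exists x'; split => //; apply: IH.
Qed.

Lemma good_mono j j' k x : j <= j' -> good j' k x -> good j k x.
Proof.
move=> le; rewrite -(subnK le); elim: (j' - j) => [|i IH] //= H.
by apply: IH; apply: good_dec.
Qed.

Definition T k x := forall j, good j k x.

Lemma T_ne k : exists x, T k x.
Proof.
apply: NNPP => H.
have H' : forall x, exists j, ~ good j k x.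
  move=> x; apply: not_all_ex_not => Hx; apply: H; by exists x.
have [J HJ] := finite_bound _ _ (fun x j jj le => good_mono j jj k x le) H'.
by have [x Hx] := good_ne J k; apply: (HJ x).
Qed.

Lemma T_ext k x : T k x -> exists x', pr _ x' = x /\ T k.+1 x'.
Proof.
move=> Tx; apply: NNPP => H.
have H' : forall x', exists j, ~ (pr _ x' = x /\ good j k.+1 x').
  move=> x'; apply: not_all_ex_not => Hx; apply: H; exists x'; split.
    by have [] := Hx 0.
  by move=> j; have [] := Hx j.
have mono : forall x' j j', j <= j' -> (pr _ x' = x /\ good j' k.+1 x') -> (pr _ x' = x /\ good j k.+1 x').
  by move=> x' j j' le [? ?]; split => //; apply: (good_mono _ _ _ _ le).
have [J HJ] := finite_bound _ _ mono H'.
by have [x' [? ?]] := Tx J.+1; apply: (HJ x').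
Qed.

Fixpoint Fs (k : nat) : {x : X k | T k x} :=
  match k with
  | 0 => constructive_indefinite_description _ (T_ne 0)
  | k'.+1 => let s := constructive_indefinite_description _ (T_ext _ _ (proj2_sig (Fs k'))) in
             exist _ (proj1_sig s) (proj2 (proj2_sig s))
  end.

Lemma compactness : exists f : forall k, X k, (forall k, Sp k (f k)) /\ (forall k, pr _ (f k.+1) = f k).
Proof.
exists (fun k => proj1_sig (Fs k)); split.
  by move=> k; exact: (proj2_sig (Fs k) 0).
move=> k /=. exact: (proj1 (proj2_sig (constructive_indefinite_description _ (T_ext k (sval (Fs k)) (proj2_sig (Fs k)))))). 
Qed.

End Compact.

Set Implicit Arguments. Unset Strict Implicit.
Import GRing.Theory.
Local Open Scope ring_scope.

Definition nu (R : pzRingType) (x : R) (N : nat) := \sum_(i < N) x ^+ i.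

Lemma nuD (R : comPzRingType) (x : R) a b : nu x (a + b) = nu x a + x ^+ a * nu x b.
Proof.
rewrite /nu big_split_ord /= mulr_sumr; congr (_ + _); apply: eq_bigr => i _.
by rewrite exprD.
Qed.

Lemma nuM (R : comPzRingType) (x : R) u M : nu x (u * M) = nu x u * nu (x ^+ u) M.
Proof.
elim: M => [|M IH]; first by rewrite muln0 /nu !big_ord0 mulr0.
rewrite mulnS addnC nuD IH /nu [in RHS]big_ord_recr /= mulrDr; congr (_ + _).
by rewrite -exprM mulrC.
Qed.

Section Core.
Variables (R : comPzRingType) (c : nat) (t : 'I_c -> R) (L : nat).

Definition inJ (r : R) := exists b : 'I_c -> R, r = \sum_i b i * nu (t i) L.
Definition eqJ (a b : R) := inJ (a - b).

Lemma inJ0 : inJ 0.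
Proof. by exists (fun=> 0); rewrite big1 // => i _; rewrite mul0r. Qed.
Lemma inJD a b : inJ a -> inJ b -> inJ (a + b).
Proof.
move=> [u ->] [v ->]; exists (fun i => u i + v i); rewrite -big_split /=.
by apply: eq_bigr => i _; rewrite mulrDl.
Qed.
Lemma inJM r a : inJ a -> inJ (r * a).
Proof.
move=> [u ->]; exists (fun i => r * u i); rewrite mulr_sumr.
by apply: eq_bigr => i _; rewrite mulrA.
Qed.
Lemma inJ_gen i : inJ (nu (t i) L).
Proof.
exists (fun j => (j == i)%:R); rewrite (bigD1 i) //= big1 => [|j nji].
  by rewrite eqxx mul1r addr0.
by rewrite (negPf nji) mul0r.
Qed.
Lemma inJ_sum I (r : seq I) (P : pred I) (F : I -> R) :
  (forall i, P i -> inJ (F i)) -> inJ (\sum_(i <- r | P i) F i).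
Proof. by move=> H; apply: big_ind => //; [exact: inJ0 | exact: inJD]. Qed.

Lemma eqJ_refl a : eqJ a a.
Proof. by rewrite /eqJ subrr; exact: inJ0. Qed.
Lemma eqJ_sym a b : eqJ a b -> eqJ b a.
Proof. by move=> H; rewrite /eqJ -opprB -mulN1r; apply: inJM. Qed.
Lemma eqJ_trans a b e : eqJ a b -> eqJ b e -> eqJ a e.
Proof. by move=> H1 H2; rewrite /eqJ -(subrKA b); apply: inJD. Qed.
Lemma eqJ_add a b a' b' : eqJ a b -> eqJ a' b' -> eqJ (a + a') (b + b').
Proof. by move=> H1 H2; rewrite /eqJ opprD addrACA; apply: inJD. Qed.
Lemma eqJ_mull r a b : eqJ a b -> eqJ (r * a) (r * b).
Proof. by move=> H; rewrite /eqJ -mulrBr; apply: inJM. Qed.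
Lemma eqJ_mul a b a' b' : eqJ a b -> eqJ a' b' -> eqJ (a * a') (b * b').
Proof.
move=> H1 H2; apply: (@eqJ_trans _ (a * b')); first exact: eqJ_mull.
by rewrite ![_ * b']mulrC; apply: eqJ_mull.
Qed.
Lemma eqJ_sum I (r : seq I) (P : pred I) (F G : I -> R) :
  (forall i, P i -> eqJ (F i) (G i)) ->
  eqJ (\sum_(i <- r | P i) F i) (\sum_(i <- r | P i) G i).
Proof.
move=> H; apply: (big_ind2 eqJ) => //; [exact: eqJ_refl | exact: eqJ_add].
Qed.
Lemma eqJ_prod I (r : seq I) (P : pred I) (F G : I -> R) :
  (forall i, P i -> eqJ (F i) (G i)) ->
  eqJ (\prod_(i <- r | P i) F i) (\prod_(i <- r | P i) G i).
Proof.
move=> H; apply: (big_ind2 eqJ) => //; [exact: eqJ_refl | exact: eqJ_mul].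
Qed.
Lemma inJ_eqJ a b : eqJ a b -> inJ b -> inJ a.
Proof. by move=> H1 H2; rewrite -(subrK b a); apply: inJD. Qed.

Lemma eqJ1_mul x y : eqJ x 1 -> eqJ y 1 -> eqJ (x * y) 1.
Proof. by move=> H1 H2; rewrite -(mulr1 1); apply: eqJ_mul. Qed.
Lemma eqJ1_exp x e : eqJ x 1 -> eqJ (x ^+ e) 1.
Proof.
move=> H; elim: e => [|e IH]; first by rewrite expr0; exact: eqJ_refl.
by rewrite exprS; apply: eqJ1_mul.
Qed.
Lemma eqJ1_prod I (r : seq I) (P : pred I) (F : I -> R) :
  (forall i, P i -> eqJ (F i) 1) -> eqJ (\prod_(i <- r | P i) F i) 1.
Proof.
move=> H; apply: (big_ind (fun x => eqJ x 1)) => //; [exact: eqJ_refl | exact: eqJ1_mul].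
Qed.

Lemma gen_eqJ1 i : eqJ (t i ^+ L) 1.
Proof. by rewrite /eqJ subrX1; apply: inJM; exact: inJ_gen. Qed.

Lemma absorb y M : eqJ (y ^+ M) 1 -> eqJ (y * nu y M) (nu y M).
Proof.
move=> H; rewrite /eqJ -{2}(mul1r (nu y M)) -mulrBl /nu -subrX1; exact: H.
Qed.
Lemma absorbX y M a : eqJ (y ^+ M) 1 -> eqJ (y ^+ a * nu y M) (nu y M).
Proof.
move=> H; elim: a => [|a IH]; first by rewrite expr0 mul1r; exact: eqJ_refl.
rewrite exprSr -mulrA; apply: (eqJ_trans _ IH); apply: eqJ_mull; exact: absorb.
Qed.

Lemma expr_modJ y M e : eqJ (y ^+ M) 1 -> eqJ (y ^+ e) (y ^+ (e %% M)).
Proof.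
move=> H; rewrite {1}(divn_eq e M) exprD mulnC exprM.
rewrite -{2}(mul1r (y ^+ (e %% M))); apply: eqJ_mul; last exact: eqJ_refl.
exact: eqJ1_exp.
Qed.

Lemma nu_coprime y M a : coprime M a -> eqJ (y ^+ M) 1 -> eqJ (nu (y ^+ a) M) (nu y M).
Proof.
case: M => [|M'] cop H; first by rewrite /nu !big_ord0; exact: eqJ_refl.
set M := M'.+1 in cop H *.
pose h (j : 'I_M) : 'I_M := inZp (a * j).
have key : forall i j : 'I_M, (i <= j)%N -> ((a * i) %% M = (a * j) %% M)%N -> i = j :> nat.
  move=> i j le E.
  have dv : (M %| j - i)%N.
    rewrite -(Gauss_dvdr _ cop) mulnBr -eqn_mod_dvd; first by rewrite E.
    by rewrite leq_mul2l le orbT.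
  case: (posnP (j - i)%N) => [|pos]; first by lia.
  have := dvdn_leq pos dv; have := ltn_ord j; lia.
have hinj : injective h.
  move=> i j /(congr1 val) /= E; apply: val_inj => /=.
  case: (leqP i j) => [le|/ltnW le]; first exact: key.
  by apply/esym/key.
rewrite /nu [in X in eqJ _ X](reindex_inj hinj) /=.
apply: eqJ_sum => j _; rewrite -exprM.
exact: (expr_modJ (a * j) H).
Qed.



Lemma core_main (d : nat) (xs : 'I_d -> R) (i0 : 'I_c) (a : 'I_d -> nat) (s0 : 'I_d) (u M : nat) :
  L = (u * M)%N ->
  coprime M (a s0) ->
  (forall s, eqJ (xs s ^+ L) 1) ->
  t i0 = \prod_s xs s ^+ a s ->
  inJ (\prod_s nu (xs s ^+ u) M * nu (t i0) u).
Proof.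
move=> HL cop Hx Ht.
pose y s := xs s ^+ u.
have Hy s : eqJ (y s ^+ M) 1 by rewrite /y -exprM -HL.
pose P := \prod_(s | s != s0) nu (y s) M.
have HT : t i0 ^+ u = y s0 ^+ a s0 * \prod_(s | s != s0) y s ^+ a s.
  rewrite Ht -prodrXl (bigD1 s0) //=; congr (_ * _); first by rewrite /y exprAC.
  by apply: eq_bigr => s _; rewrite /y exprAC.
have E1 : eqJ (\prod_s nu (xs s ^+ u) M) (nu (t i0 ^+ u) M * P).
  rewrite (bigD1 s0) //= -/(y s0) -/P.
  apply: (@eqJ_trans _ (nu (y s0 ^+ a s0) M * P)).
    by apply: eqJ_mul; [apply: eqJ_sym; exact: nu_coprime | exact: eqJ_refl].
  rewrite /nu !mulr_suml; apply: eqJ_sum => j _.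
  rewrite HT exprMn -mulrA; apply: eqJ_mull.
  rewrite -prodrXl -big_split /=; apply: eqJ_sym; apply: eqJ_prod => s _.
  by rewrite -exprM; exact: absorbX.
apply: (@inJ_eqJ _ (nu (t i0 ^+ u) M * P * nu (t i0) u)).
  by apply: eqJ_mul; [exact: E1 | exact: eqJ_refl].
rewrite mulrC mulrA -nuM -HL mulrC; apply: inJM; exact: inJ_gen.
Qed.

End Core.
Section S.
Variables (p d k : nat).
Local Notation R := (GRl p d k).
Local Notation G := (Gl p d k).
HB.instance Definition _ := GRing.Zmodule.copy R {ffun Gl p d k -> Zl p k}.

Lemma mulGRC : commutative (@mulGR p d k).
Proof.
move=> f g; apply/ffunP=> z; rewrite !ffunE.
rewrite (reindex_inj (can_inj (subKr z))) /=.
by apply: eq_bigr => x _; rewrite subKr mulrC.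
Qed.

Lemma mulGRA : associative (@mulGR p d k).
Proof.
move=> f g h; apply/ffunP=> z; rewrite /mulGR !ffunE; symmetry.
under eq_bigr do rewrite ffunE mulr_suml.
under [RHS]eq_bigr do rewrite ffunE mulr_sumr.
rewrite exchange_big /=; apply: eq_bigr => w _.
rewrite (reindex_inj (addIr w)) /=.
apply: eq_bigr => v _; rewrite addrK mulrA.
by rewrite opprD addrA [_ - v - w]addrAC.
Qed.

Lemma mul1GR : left_id (oneGR p d k) (@mulGR p d k).
Proof.
move=> f; apply/ffunP=> z; rewrite !ffunE.
rewrite (bigD1 0) //= big1 => [|x nx0]; first by rewrite ffunE eqxx mul1r subr0 addr0.
by rewrite ffunE (negPf nx0) mul0r.
Qed.

Lemma mulGRDl : left_distributive (@mulGR p d k) +%R.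
Proof.
move=> f g h; apply/ffunP=> z; rewrite !ffunE -big_split /=.
by apply: eq_bigr => x _; rewrite ffunE mulrDl.
Qed.

HB.instance Definition _ := GRing.Zmodule_isComPzRing.Build R mulGRA mulGRC mul1GR mulGRDl.

Lemma mulGRE (f g : R) : mulGR f g = f * g. Proof. by []. Qed.
Lemma oneGRE : oneGR p d k = 1. Proof. by []. Qed.
Lemma addGRE (f g : R) : addGR f g = f + g. Proof. by []. Qed.
Lemma zeroGRE : zeroGR p d k = 0. Proof. by []. Qed.
End S.

Section Red.
Variables (p d : nat).
Hypothesis p_gt1 : (1 < p)%N.

Lemma ZlE k : ((Zp_trunc (p ^ k.+1)).+2 = p ^ k.+1)%N.
Proof. apply: Zp_cast. apply: (leq_trans p_gt1). rewrite -{1}(expn1 p) leq_pexp2l //. exact: ltnW. Qed.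

Lemma val_addZ k (x y : Zl p k) : val (x + y) = ((val x + val y) %% p ^ k.+1)%N.
Proof. rewrite -[X in (_ %% X)%N]ZlE. reflexivity. Qed.
Lemma val_mulZ k (x y : Zl p k) : val (x * y) = ((val x * val y) %% p ^ k.+1)%N.
Proof. rewrite -[X in (_ %% X)%N]ZlE. reflexivity. Qed.
Lemma val_redZ k (x : Zl p k.+1) : val (redZ x) = (val x %% p ^ k.+1)%N.
Proof. rewrite -[X in (_ %% X)%N]ZlE. reflexivity. Qed.
Lemma val_natZ k n : val (n%:R : Zl p k) = (n %% p ^ k.+1)%N.
Proof. by rewrite Zp_nat /= ZlE. Qed.

Lemma dvd_pk k : (p ^ k.+1 %| p ^ k.+2)%N.
Proof. by rewrite dvdn_exp2l. Qed.

Lemma redZD k (x y : Zl p k.+1) : redZ (x + y) = redZ x + redZ y.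
Proof.
apply: val_inj; rewrite val_addZ !val_redZ val_addZ modnDm.
by rewrite (modn_dvdm _ (dvd_pk k)).
Qed.
Lemma redZM k (x y : Zl p k.+1) : redZ (x * y) = redZ x * redZ y.
Proof.
apply: val_inj; rewrite val_mulZ !val_redZ val_mulZ modnMm.
by rewrite (modn_dvdm _ (dvd_pk k)).
Qed.
Lemma redZ0 k : redZ (0 : Zl p k.+1) = 0.
Proof. by apply: val_inj; rewrite val_redZ /= mod0n. Qed.
Lemma redZn k n : redZ (n%:R : Zl p k.+1) = n%:R.
Proof. by apply: val_inj; rewrite val_redZ !val_natZ (modn_dvdm _ (dvd_pk k)). Qed.
Lemma redZ1 k : redZ (1 : Zl p k.+1) = 1.
Proof. exact: (redZn k 1). Qed.
Lemma redZ_sum k I (r : seq I) (P : pred I) (F : I -> Zl p k.+1) :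
  redZ (\sum_(i <- r | P i) F i) = \sum_(i <- r | P i) redZ (F i).
Proof. exact: (big_morph _ (@redZD k) (redZ0 k)). Qed.

Lemma redGD k (u v : Gl p d k.+1) : redG (u + v) = redG u + redG v.
Proof. by apply/matrixP => i j; rewrite !mxE redZD. Qed.
Lemma redG0 k : redG (0 : Gl p d k.+1) = 0.
Proof. by apply/matrixP => i j; rewrite !mxE redZ0. Qed.
Lemma redGN k (u : Gl p d k.+1) : redG (- u) = - redG u.
Proof. by apply/eqP; rewrite -subr_eq0 opprK -redGD addNr redG0. Qed.
Lemma redGB k (u v : Gl p d k.+1) : redG (u - v) = redG u - redG v.
Proof. by rewrite redGD redGN. Qed.
Lemma redGMn k (u : Gl p d k.+1) n : redG (u *+ n) = redG u *+ n.
Proof. by elim: n => [|n IH]; rewrite ?mulr0n ?redG0 // !mulrS redGD IH. Qed.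
Lemma redG_sum k I (r : seq I) (P : pred I) (F : I -> Gl p d k.+1) :
  redG (\sum_(i <- r | P i) F i) = \sum_(i <- r | P i) redG (F i).
Proof. exact: (big_morph _ (@redGD k) (redG0 k)). Qed.

Lemma addGRx k (f g : GRl p d k) x : (f + g) x = f x + g x.
Proof. by rewrite -addGRE ffunE. Qed.
Lemma zeroGRx k x : (0 : GRl p d k) x = 0.
Proof. by rewrite -zeroGRE ffunE. Qed.

Lemma projGRE k (f : GRl p d k.+1) y :
  projGR f y = \sum_x ((redG x == y)%:R * redZ (f x)).
Proof.
rewrite ffunE big_mkcond /=; apply: eq_bigr => x _.
by case: eqP => _; rewrite ?mul1r ?mul0r.
Qed.

Lemma projGRD k (f g : GRl p d k.+1) : projGR (f + g) = projGR f + projGR g.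
Proof.
apply/ffunP => y; rewrite addGRx !projGRE -big_split /=.
by apply: eq_bigr => x _; rewrite addGRx redZD mulrDr.
Qed.
Lemma projGR0 k : projGR (0 : GRl p d k.+1) = 0.
Proof.
apply/ffunP => y; rewrite projGRE zeroGRx big1 // => x _.
by rewrite zeroGRx redZ0 mulr0.
Qed.
Lemma projGR_delta k (g : Gl p d k.+1) : projGR (deltaGR g) = deltaGR (redG g).
Proof.
apply/ffunP => y; rewrite projGRE [RHS]ffunE (bigD1 g) //= big1 => [|x nxg].
  by rewrite ffunE eqxx redZ1 mulr1 addr0 eq_sym.
by rewrite ffunE (negPf nxg) redZ0 mulr0.
Qed.
Lemma projGR1 k : projGR (1 : GRl p d k.+1) = 1.
Proof. by rewrite -oneGRE projGR_delta redG0. Qed.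

Lemma projGRM k (f g : GRl p d k.+1) : projGR (f * g) = projGR f * projGR g.
Proof.
apply/ffunP => y; rewrite projGRE -!mulGRE [in RHS]/mulGR [RHS]ffunE.
transitivity (\sum_w \sum_v ((redG v == y - redG w)%:R * (redZ (f w) * redZ (g v)))).
  under eq_bigr do rewrite ffunE redZ_sum mulr_sumr.
  rewrite exchange_big /=; apply: eq_bigr => w _.
  rewrite (reindex_inj (addIr w)) /=; apply: eq_bigr => v _.
  by rewrite addrK redZM redGD -subr_eq eq_sym opprK eq_sym.
symmetry.
under eq_bigr do rewrite !projGRE mulr_suml.
under eq_bigr do under eq_bigr do rewrite mulr_sumr.
rewrite exchange_big /=; apply: eq_bigr => w _.
rewrite exchange_big /=; apply: eq_bigr => v _.
rewrite (bigD1 (redG w)) //= big1 => [|u nuw].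
  by rewrite eqxx mul1r addr0 mulrCA.
by rewrite eq_sym (negPf nuw) mul0r mul0r.
Qed.

Lemma projGR_sum k I (r : seq I) (P : pred I) (F : I -> GRl p d k.+1) :
  projGR (\sum_(i <- r | P i) F i) = \sum_(i <- r | P i) projGR (F i).
Proof. exact: (big_morph _ (@projGRD k) (projGR0 k)). Qed.
Lemma projGR_prod k I (r : seq I) (P : pred I) (F : I -> GRl p d k.+1) :
  projGR (\prod_(i <- r | P i) F i) = \prod_(i <- r | P i) projGR (F i).
Proof. exact: (big_morph _ (@projGRM k) (projGR1 k)). Qed.


Lemma big_addGR k I (r : seq I) (P : pred I) (F : I -> GRl p d k) :
  \big[@addGR p d k/zeroGR p d k]_(i <- r | P i) F i = \sum_(i <- r | P i) F i.
Proof. by []. Qed.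
Lemma big_mulGR k I (r : seq I) (P : pred I) (F : I -> GRl p d k) :
  \big[@mulGR p d k/oneGR p d k]_(i <- r | P i) F i = \prod_(i <- r | P i) F i.
Proof. by []. Qed.

Lemma deltaD k (a b : Gl p d k) : deltaGR (a + b) = deltaGR a * deltaGR b.
Proof.
apply/ffunP => z; rewrite -mulGRE /mulGR !ffunE (bigD1 a) //= big1 => [|x nxa].
  by rewrite !ffunE eqxx mul1r addr0 subr_eq addrC.
by rewrite [deltaGR a x]ffunE (negPf nxa) mul0r.
Qed.
Lemma delta0 k : deltaGR (0 : Gl p d k) = 1.
Proof. by []. Qed.
Lemma deltaMn k (a : Gl p d k) n : deltaGR (a *+ n) = deltaGR a ^+ n.
Proof. by elim: n => [|n IH]; rewrite ?mulr0n ?expr0 // mulrS exprS deltaD IH. Qed.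
Lemma delta_sum k I (r : seq I) (P : pred I) (F : I -> Gl p d k) :
  deltaGR (\sum_(i <- r | P i) F i) = \prod_(i <- r | P i) deltaGR (F i).
Proof. exact: (big_morph _ (@deltaD k) (delta0 k)). Qed.

Lemma nuSE (s : GamF p d) n m k :
  nuS s n m k = \sum_(j < p ^ (m - n)) (deltaGR (s k) ^+ (p ^ n)) ^+ j.
Proof.
rewrite /nuS big_addGR; apply: eq_bigr => j _.
by rewrite deltaMn -exprM mulnC exprM.
Qed.

End Red.

Section Main.
Variables (p d : nat).
Hypothesis pp : prime p.
Let p_gt1 : (1 < p)%N := prime_gt1 pp.

Lemma nuS_compat (s : GamF p d) n m : isGam s -> isLam (nuS s n m).
Proof.
move=> Hs k; rewrite /nuS !big_addGR (projGR_sum p_gt1); apply: eq_bigr => j _.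
by rewrite (projGR_delta p_gt1) (redGMn p_gt1) Hs.
Qed.

Lemma nuNM_compat (sigma : 'I_d -> GamF p d) n m :
  (forall s, isGam (sigma s)) -> isLam (nuNM sigma n m).
Proof.
move=> Hs k; rewrite /nuNM !big_mulGR (projGR_prod p_gt1); apply: eq_bigr => s _.
exact: nuS_compat.
Qed.

Lemma sum_compat c (a g : 'I_c -> LamF p d) :
  (forall i, isLam (a i)) -> (forall i, isLam (g i)) ->
  isLam (fun k => \sum_i a i k * g i k).
Proof.
move=> Ha Hg k; rewrite (projGR_sum p_gt1); apply: eq_bigr => i _.
by rewrite (projGRM p_gt1) Ha Hg.
Qed.

Lemma Gl_mulrn_mod k (v : Gl p d k) a : v *+ a = v *+ (a %% p ^ k.+1)%N.
Proof.
rewrite {1}(divn_eq a (p ^ k.+1)) mulrnDr mulnC mulrnA.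
have -> : v *+ (p ^ k.+1)%N = 0.
  apply/matrixP => i j; rewrite mulmxnE mxE -mulr_natr.
  have -> : ((p ^ k.+1)%N%:R : Zl p k) = 0.
    by apply: val_inj; rewrite /= (val_natZ p_gt1) modnn.
  by rewrite mulr0.
by rewrite mul0rn add0r.
Qed.

Lemma val_mod_p (A : ZpF p) : isZp A -> forall k, ((A k : nat) %% p = (A 0 : nat) %% p)%N.
Proof.
move=> HA; elim=> [|k IH] //; rewrite -IH -(HA k) (val_redZ p_gt1).
by rewrite (modn_dvdm _ (dvdn_exp (ltn0Sn k) (dvdnn p))).
Qed.

Lemma unit_coord (sigma : 'I_d -> GamF p d) (g : GamF p d) (A : 'I_d -> ZpF p) :
  (forall s, isGam (sigma s)) -> (forall s, isZp (A s)) ->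
  (forall k, g k = \sum_(s < d) zscale (A s) (sigma s) k) ->
  ~ (exists g', isGam g' /\ forall k, g k = g' k *+ p) ->
  exists s0, ~~ (p %| (A s0 0 : nat))%N.
Proof.
move=> Hs HA Hg Hnot.
case: (boolP [exists s, ~~ (p %| (A s 0 : nat))%N]) => [/existsP [s0 H] | H]; first by exists s0.
exfalso; apply: Hnot.
have dv : forall s k, (p %| (A s k : nat))%N.
  move=> s k; move/existsPn: H => /(_ s); rewrite negbK.
  by rewrite /dvdn (val_mod_p (HA s)).
pose B s k : Zl p k := ((A s k.+1 : nat) %/ p)%N%:R.
have valB s k : (B s k : nat) = (((A s k.+1 : nat) %/ p) %% p ^ k.+1)%N.
  by rewrite (val_natZ p_gt1).
have e3 s k : (A s k : nat) = ((A s k.+1 : nat) %% p ^ k.+1)%N.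
  by rewrite -{1}(HA s k) (val_redZ p_gt1).
have keyA s k : ((A s k.+1 : nat) %/ p = ((A s k.+2 : nat) %/ p) %% p ^ k.+1)%N.
  apply/eqP; rewrite -(eqn_pmul2l (prime_gt0 pp)) muln_modr -expnS.
  by rewrite mulnC divnK // [(p * _)%N]mulnC divnK // -e3.
pose g' k := \sum_(s < d) sigma s k *+ (B s k : nat).
exists g'; split.
  move=> k; rewrite /g' (redG_sum p_gt1); apply: eq_bigr => s _.
  rewrite (redGMn p_gt1) Hs.
  rewrite Gl_mulrn_mod [RHS]Gl_mulrn_mod; congr (_ *+ _).
  rewrite !valB modn_mod (modn_dvdm _ (dvd_pk p k)) (keyA s k) modn_mod.
  by [].
move=> k; rewrite Hg /g' -sumrMnl; apply: eq_bigr => s _; rewrite /zscale -mulrnA.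
rewrite Gl_mulrn_mod [RHS]Gl_mulrn_mod; congr (_ *+ _).
by rewrite valB modnMml divnK // (e3 s k) modn_mod.
Qed.

End Main.

Lemma nuS_nu p d (s : GamF p d) n m k :
  nuS s n m k = nu (deltaGR (s k) ^+ (p ^ n)) (p ^ (m - n)).
Proof. exact: nuSE. Qed.
Lemma nuS_nu0 p d (s : GamF p d) m k :
  nuS s 0 m k = nu (deltaGR (s k)) (p ^ m).
Proof. by rewrite nuS_nu expn0 expr1 subn0. Qed.

Theorem lemma2p5 (p d c : nat) (sigma : 'I_d -> GamF p d) (tau : 'I_c -> GamF p d)
  (n m : nat) :
  prime p -> is_Zp_basis sigma -> tight tau -> (n <= m)%N ->
  forall x : LamF p d, in_J tau n x -> in_J tau m (mulL (nuNM sigma n m) x).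
Proof.
move=> pp [Hsig1 [Hsig2 _]] [Htau [Hspan [Hnotp _]]] le_nm x [aa [Haa Hx]].
have p_gt1 := prime_gt1 pp.
pose y := mulL (nuNM sigma n m) x.
have Hxc : isLam x.
  move=> k; rewrite (Hx k.+1) (Hx k) !big_addGR.
  exact: (sum_compat pp Haa (fun i => nuS_compat pp 0 n (Htau i)) k).
have Hyc : isLam y.
  move=> k; rewrite /y /mulL !mulGRE (projGRM p_gt1) Hxc.
  by rewrite (nuNM_compat pp n m Hsig1).
have level : forall k, exists b : 'I_c -> GRl p d k,
    y k = \sum_i b i * nuS (tau i) 0 m k.
  move=> k.
  pose t := fun j => deltaGR (tau j k).
  have core : forall i0, inJ t (p ^ m) (nuNM sigma n m k * nuS (tau i0) 0 n k).
    move=> i0.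
    have [A [HA HtA]] := Hsig2 _ (Htau i0).
    have [s0 Hs0] := unit_coord pp Hsig1 HA HtA (Hnotp i0).
    have -> : nuNM sigma n m k = \prod_s nu (deltaGR (sigma s k) ^+ (p ^ n)%N) (p ^ (m - n)).
      by rewrite /nuNM big_mulGR; apply: eq_bigr => s _; rewrite nuS_nu.
    rewrite nuS_nu0.
    apply: (@core_main _ _ t (p ^ m) d (fun s => deltaGR (sigma s k)) i0 (fun s => (A s k : nat)) s0).
    - by rewrite -expnD subnKC.
    - apply: coprimeXl; rewrite prime_coprime //.
      by rewrite /dvdn (val_mod_p pp (HA s0)).
    - move=> s; have [e He] := Hspan _ (Hsig1 s) k.
      rewrite He delta_sum -prodrXl; apply: eqJ1_prod => j _.
      rewrite deltaMn exprAC; apply: eqJ1_exp; exact: gen_eqJ1.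
    - rewrite /t HtA delta_sum; apply: eq_bigr => s _.
      by rewrite /zscale deltaMn.
  have : inJ t (p ^ m) (y k).
    rewrite /y /mulL (Hx k) big_addGR !mulGRE mulr_sumr; apply: inJ_sum => i _.
    by rewrite mulrCA; apply: inJM; exact: core.
  move=> [b Hb]; exists b; rewrite Hb; apply: eq_bigr => i _.
  by rewrite nuS_nu0.
pose X := fun k => {ffun 'I_c -> GRl p d k}.
pose pr := fun k (b : X k.+1) => ([ffun i => projGR (b i)] : X k).
pose Sp := fun k (b : X k) => y k = \sum_i b i * nuS (tau i) 0 m k.
have Sne : forall k, exists b, Sp k b.
  move=> k; have [b Hb] := level k; exists [ffun i => b i].
  by rewrite /Sp Hb; apply: eq_bigr => i _; rewrite ffunE.
have Scomp : forall k b, Sp k.+1 b -> Sp k (pr k b).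
  move=> k b; rewrite /Sp => Hb; rewrite -Hyc Hb (projGR_sum p_gt1).
  apply: eq_bigr => i _; rewrite ffunE (projGRM p_gt1).
  by rewrite (nuS_compat pp 0 m (Htau i)).
have [f [Hf1 Hf2]] := compactness X pr Sp Sne Scomp.
exists (fun i k => f k i); split.
  by move=> i k /=; rewrite -(Hf2 k) ffunE.
move=> k; exact: (Hf1 k).
Qed.
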